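(* Fix an integer $k$ and let $\mathcal V_k$ be as defined in the context. Define constants $M_{t,j}$ as in the context. Then the max-min problem $$\max_{v\in\mathcal V_k}\ \min_{y\in[0,1]^{\mathcal N}}\Big\{\sum_{i=1}^m\alpha_iy_{J_i} : y_{J''}-y_J\le1-v_t,\ y_{J''}-y_{J'}\le1-v_t,\ y_J+y_{J'}-y_{J''}\le2-v_t\ \ \forall t=(J,J',J'')\in\mathcal T\Big\}$$ is equivalent to the mixed-integer program $$\max\ -\sum_{t\in\mathcal T}\lambda_{t,3}-\sum_{J\in\mathcal N}\mu_J$$ over $v\in\mathcal V_k$, $\lambda=(\lambda_{t,j})_{t\in\mathcal T,j=1,2,3}\ge0$, $\mu=(\mu_J)_{J\in\mathcal N}\ge0$, subject to, for every $J\in\mathcal N$, $\beta_J+\sum_{t:\mathsf{tail1}(t)=J}(-\lambda_{t,1}+\lambda_{t,3})+\sum_{t:\mathsf{tail2}(t)=J}(-\lambda_{t,2}+\lambda_{t,3})+\sum_{t:\mathsf{head}(t)=J}(\lambda_{t,1}+\lambda_{t,2}-\lambda_{t,3})+\mu_J\ge0,$ and $\lambda_{t,j}\le M_{t,j}v_t$ for all $t\in\mathcal T$, $j=1,2,3$; in the sense that for each fixed $v\in\mathcal V_k$ the value of the inner minimization equals the maximum of the MIP objective over $(\lambda,\mu)$ with that $v$, so the two problems have the same optimal value and the same maximizing vectors $v$.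
   Context: A multilinear program has data $n,m$, coefficients $\alpha_i\in\mathbb{R}$ and nonempty index sets $J_i\subseteq[n]$. Let $\mathcal N_i=\{J:\emptyset\ne J\subseteq J_i\}$, $\mathcal N=\bigcup_i\mathcal N_i$, $\beta_J=\sum_{i:J_i=J}\alpha_i$ for $J\in\mathcal N$, and $\eta=-\sum_i\min(0,\alpha_i)$. A triple is $t=(J,J',J'')$ with $J''\in\mathcal N$, $|J''|\ge2$, $J,J'$ nonempty, disjoint, $J\cup J'=J''$, listed with $J,J'$ in lexicographic order; $\mathsf{tail1}(t)=J$, $\mathsf{tail2}(t)=J'$, $\mathsf{head}(t)=J''$, $\mathsf{tails}(t)=\{J,J'\}$. $\mathcal T$ is the set of all triples and $\mathcal T_i=\{t\in\mathcal T:\mathsf{head}(t)\in\mathcal N_i\}$. $\mathcal V$ is the set of $v\in\{0,1\}^{\mathcal T}$ for which there exist $u_i\in\{0,1\}^{\mathcal T_i}$ ($i\in[m]$) with: $\sum_{t\in\mathcal T_i:\mathsf{head}(t)=J_i}u_{i,t}=1$ for all $i$ with $|J_i|>1$; $\sum_{t\in\mathcal T_i:\mathsf{head}(t)=J}u_{i,t}=\sum_{t\in\mathcal T_i:J\in\mathsf{tails}(t)}u_{i,t}$ for all $i$ and all $J\in\mathcal N_i$ with $2\le|J|<|J_i|$; and $u_{i,t}\le v_t$ for all $i$, $t\in\mathcal T_i$. $\mathcal V_k=\{v\in\mathcal V:\|v\|_1\le k\}$. The constants: $M_{t,3}=\eta$ for all $t$; for $j=1,2$ define recursively by increasing $|J|$: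 $R_J=\max\big(0,\ \beta_J+\eta+\sum_{t\in\mathcal T:\mathsf{head}(t)=J}(M_{t,1}+M_{t,2})\big)$ (the sum is empty when $|J|=1$), and set $M_{t,1}=R_{\mathsf{tail1}(t)}$, $M_{t,2}=R_{\mathsf{tail2}(t)}$ (well defined since tails are strictly smaller than heads). *)

(* Defs.v *)
From HB Require Import structures.
From mathcomp Require Import all_boot all_order all_algebra.
Set Implicit Arguments. Unset Strict Implicit. Unset Printing Implicit Defensive.
Import Order.TTheory GRing.Theory Num.Theory.

Fixpoint lexlt (s t : seq nat) : bool :=
  match s, t with
  | [::], [::] => false
  | [::], _ :: _ => true
  | _ :: _, [::] => false
  | x :: s', y :: t' => (x < y) || ((x == y) && lexlt s' t')
  end.

Section MultilinearProgram.
Variables (n m : nat) (Js : 'I_m -> {set 'I_n}).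

Definition inNi (i : 'I_m) (J : {set 'I_n}) : bool := (J != set0) && (J \subset Js i).
Definition inN (J : {set 'I_n}) : bool := [exists i, inNi i J].

Definition setseq (J : {set 'I_n}) : seq nat := sort leq [seq val x | x in J].

(* (J, J') with J'' = J :|: J' *)
Definition is_triple (p : {set 'I_n} * {set 'I_n}) : bool :=
  [&& inN (p.1 :|: p.2), 1 < #|p.1 :|: p.2|, p.1 != set0, p.2 != set0,
      [disjoint p.1 & p.2] & lexlt (setseq p.1) (setseq p.2)].

Definition triple := {p : {set 'I_n} * {set 'I_n} | is_triple p}.

Definition tail1 (t : triple) : {set 'I_n} := (val t).1.
Definition tail2 (t : triple) : {set 'I_n} := (val t).2.
Definition head (t : triple) : {set 'I_n} := tail1 t :|: tail2 t.

Definition inTi (i : 'I_m) (t : triple) : bool := inNi i (head t).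

(* v \in V ; u_i is represented by u i restricted to T_i *)
Definition inV (v : triple -> bool) : Prop :=
  exists u : 'I_m -> triple -> bool,
    [/\ forall i, 1 < #|Js i| ->
          (\sum_(t | inTi i t && (head t == Js i)) (u i t : nat))%N = 1%N,
        forall i J, inNi i J -> 2 <= #|J| -> #|J| < #|Js i| ->
          (\sum_(t | inTi i t && (head t == J)) (u i t : nat))%N =
          (\sum_(t | inTi i t && ((J == tail1 t) || (J == tail2 t))) (u i t : nat))%N
      & forall i t, inTi i t -> (u i t <= v t)%N].

Definition inVk (k : nat) (v : triple -> bool) : Prop :=
  inV v /\ (\sum_t (v t : nat) <= k)%N.

Variables (R : realFieldType) (alpha : 'I_m -> R).
Local Open Scope ring_scope.

Definition beta (J : {set 'I_n}) : R := \sum_(i | Js i == J) alpha i.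
Definition eta : R := - \sum_i Num.min 0 (alpha i).

(* R_J computed with fuel d >= |J| (recursion on |J|) *)
Fixpoint Rfuel (d : nat) (J : {set 'I_n}) : R :=
  match d with
  | O => 0
  | d'.+1 => Num.max 0 (beta J + eta +
              \sum_(t | head t == J) (Rfuel d' (tail1 t) + Rfuel d' (tail2 t)))
  end.
Definition Rconst (J : {set 'I_n}) : R := Rfuel #|J| J.

Definition M1 (t : triple) : R := Rconst (tail1 t).
Definition M2 (t : triple) : R := Rconst (tail2 t).
Definition M3 (t : triple) : R := eta.

(* inner minimization problem (y indexed by all subsets; only J \in N matter) *)
Definition inner_obj (y : {set 'I_n} -> R) : R := \sum_i alpha i * y (Js i).
Definition inner_feas (v : triple -> bool) (y : {set 'I_n} -> R) : Prop :=
  (forall J, inN J -> 0 <= y J <= 1) /\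
  (forall t : triple,
     [/\ y (head t) - y (tail1 t) <= 1 - (v t)%:R,
         y (head t) - y (tail2 t) <= 1 - (v t)%:R
       & y (tail1 t) + y (tail2 t) - y (head t) <= 2 - (v t)%:R]).

Definition inner_min (v : triple -> bool) (c : R) : Prop :=
  (exists y, inner_feas v y /\ inner_obj y = c) /\
  (forall y, inner_feas v y -> c <= inner_obj y).

Definition mip_obj (l3 : triple -> R) (mu : {set 'I_n} -> R) : R :=
  - \sum_t l3 t - \sum_(J | inN J) mu J.
Definition mip_feas (v : triple -> bool) (l1 l2 l3 : triple -> R)
    (mu : {set 'I_n} -> R) : Prop :=
  [/\ forall t, [/\ 0 <= l1 t, 0 <= l2 t & 0 <= l3 t],
      forall J, inN J -> 0 <= mu J,
      forall J, inN J ->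
        0 <= beta J
             + \sum_(t | tail1 t == J) (- l1 t + l3 t)
             + \sum_(t | tail2 t == J) (- l2 t + l3 t)
             + \sum_(t | head t == J) (l1 t + l2 t - l3 t)
             + mu J
    & forall t, [/\ l1 t <= M1 t * (v t)%:R, l2 t <= M2 t * (v t)%:R
                  & l3 t <= M3 t * (v t)%:R]].

Definition mip_max (v : triple -> bool) (c : R) : Prop :=
  (exists l1 l2 l3 mu, mip_feas v l1 l2 l3 mu /\ mip_obj l3 mu = c) /\
  (forall l1 l2 l3 mu, mip_feas v l1 l2 l3 mu -> mip_obj l3 mu <= c).

End MultilinearProgram.

(* Main.v *)
Require Import Defs.
From HB Require Import structures.
From mathcomp Require Import all_boot all_order all_algebra.
From mathcomp Require Import ring lra.
Import Order.TTheory GRing.Theory Num.Theory.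
Set Implicit Arguments. Unset Strict Implicit. Unset Printing Implicit Defensive.
Local Open Scope ring_scope.

(* Proof via Fourier-Motzkin elimination -> LP strong duality,
   then the big-M bounds are shown to hold for every optimal dual solution. *)
Lemma sum_option (R : nmodType) (X : finType) (F : option X -> R) :
  \sum_v F v = F None + \sum_x F (Some x).
Proof.
rewrite (bigD1 None) //=; congr (_ + _).
rewrite (reindex_omap Some id) /=; last by case.
apply: eq_bigl => x /=. by rewrite eqxx.
Qed.

Section FM.
Variables (R : realFieldType) (V : finType).
Definition row := ({ffun V -> R} * R)%type.
Definition ev (a : {ffun V -> R}) (y : V -> R) : R := \sum_v a v * y v.
Definition holds (r : row) (y : V -> R) : Prop := ev r.1 y <= r.2.

Definition sc (c : R) (a : {ffun V -> R}) : {ffun V -> R} := [ffun v => c * a v].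

Inductive cone (S : row -> Prop) : row -> Prop :=
| c_gen r : S r -> cone S r
| c_add r1 r2 : cone S r1 -> cone S r2 -> cone S (r1.1 + r2.1, r1.2 + r2.2)
| c_scale (c : R) r : 0 <= c -> cone S r -> cone S (sc c r.1, c * r.2).

Lemma evD a1 a2 y : ev (a1 + a2) y = ev a1 y + ev a2 y.
Proof. rewrite /ev -big_split /=; apply: eq_bigr => i _; by rewrite ffunE mulrDl. Qed.
Lemma evZ c a y : ev (sc c a) y = c * ev a y.
Proof. rewrite /ev mulr_sumr; apply: eq_bigr => i _; by rewrite ffunE mulrA. Qed.

Lemma cone_holds (S : row -> Prop) y : (forall r, S r -> holds r y) -> forall r, cone S r -> holds r y.
Proof.
move=> HS r; elim=> {r} [r /HS //|r1 r2 _ H1 _ H2|c r c0 _ H].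
- rewrite /holds /= evD; exact: lerD.
- rewrite /holds /= evZ; exact: ler_wpM2l.
Qed.

Lemma cone_trans (S S' : row -> Prop) : (forall r, S' r -> cone S r) -> forall r, cone S' r -> cone S r.
Proof.
move=> HS r; elim=> {r} [r /HS //|r1 r2 _ H1 _ H2|c r c0 _ H].
- exact: c_add.
- exact: c_scale.
Qed.

Lemma cone_zero (S : row -> Prop) (j : V) : (forall r, S r -> r.1 j = 0) -> forall r, cone S r -> r.1 j = 0.
Proof.
move=> HS r; elim=> {r} [r /HS //|r1 r2 _ H1 _ H2|c r c0 _ H] /=;
  by rewrite ffunE ?H1 ?H2 ?H ?addr0 ?mulr0.
Qed.

Definition comb (j : V) (p q : row) : row :=
  (sc (- q.1 j) p.1 + sc (p.1 j) q.1, (- q.1 j) * p.2 + p.1 j * q.2).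
Definition elim1 (j : V) (L : seq row) : seq row :=
  [seq r : row <- L | r.1 j == 0] ++
  [seq comb j p q | p <- [seq r : row <- L | 0 < r.1 j], q <- [seq r : row <- L | r.1 j < 0]].

Lemma elim1_zero j L r : r \in elim1 j L -> r.1 j = 0.
Proof.
rewrite mem_cat => /orP[]; first by rewrite mem_filter => /andP[/eqP].
case/allpairsP => [[p q]] /= [_ _ ->] /=. rewrite !ffunE /=. lra.
Qed.

Lemma elim1_cone j L r : r \in elim1 j L -> cone (fun r => r \in L) r.
Proof.
rewrite mem_cat => /orP[]; first by rewrite mem_filter => /andP[_ H]; apply: c_gen.
case/allpairsP => [[p q]] /= []; rewrite !mem_filter => /andP[pj pL] /andP[qj qL] ->.
have h1 : 0 <= - q.1 j by rewrite oppr_ge0 ltW.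
have h2 : 0 <= p.1 j by rewrite ltW.
exact: (c_add (c_scale h1 (c_gen (S := fun r => r \in L) pL)) (c_scale h2 (c_gen (S := fun r => r \in L) qL))).
Qed.

Lemma sandwich (ls us : seq R) :
  (forall l u, l \in ls -> u \in us -> l <= u) ->
  exists s, (forall l, l \in ls -> l <= s) /\ (forall u, u \in us -> s <= u).
Proof.
elim: ls => [|l ls IH] H.
- elim: us H => [|u us IHu] H; first by exists 0.
  have [s [_ Hs]] := IHu (fun l u hl _ => ltac:(by rewrite in_nil in hl)).
  exists (Num.min s u); split=> // u'; rewrite inE => /orP[/eqP ->|/Hs].
  + by rewrite ge_min lexx orbT.
  + by move=> h; rewrite ge_min h.
- have [s [H1 H2]] : exists s, (forall l, l \in ls -> l <= s) /\ (forall u, u \in us -> s <= u).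
    apply: IH => l' u hl hu; apply: H => //; by rewrite inE hl orbT.
  exists (Num.max l s); split.
  + move=> l'; rewrite inE => /orP[/eqP ->|/H1 h]; by rewrite le_max ?lexx ?h ?orbT.
  + move=> u hu; rewrite ge_max H2 // andbT; apply: H => //; by rewrite inE eqxx.
Qed.

Definition upd (y : V -> R) (j : V) (t : R) : V -> R := fun v => if v == j then t else y v.

Lemma ev_upd a y j t : ev a (upd y j t) = ev a y + a j * (t - y j).
Proof.
rewrite /ev (bigD1 j) //= [in RHS](bigD1 j) //= /upd eqxx.
rewrite (eq_bigr (fun v => a v * y v)); last by move=> v /negPf ->.
ring.
Qed.

Lemma elim1_sound j L y : (forall r, r \in elim1 j L -> holds r y) ->
  exists t, forall r, r \in L -> holds r (upd y j t).
Proof.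
move=> H.
set res := fun r : row => r.2 - ev r.1 y.
set ls := [seq res q / q.1 j | q <- [seq r : row <- L | r.1 j < 0]].
set us := [seq res p / p.1 j | p <- [seq r : row <- L | 0 < r.1 j]].
have Hsw : forall l u, l \in ls -> u \in us -> l <= u.
  move=> l u /mapP [q qN ->] /mapP [p pP ->].
  have hc : holds (comb j p q) y.
    by apply: H; rewrite mem_cat; apply/orP; right; apply/allpairsP; exists (p, q).
  move: qN pP; rewrite !mem_filter => /andP[qj _] /andP[pj _].
  move: hc; rewrite /holds /= evD !evZ => hc.
  set rp := res p / p.1 j; set rq := res q / q.1 j.
  have ep : res p = rp * p.1 j by rewrite /rp divfK // gt_eqF.
  have eq : res q = rq * q.1 j by rewrite /rq divfK // lt_eqF.
  have h2 : 0 <= (p.1 j * - q.1 j) * (rp - rq).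
    have : 0 <= - q.1 j * res p + p.1 j * res q by rewrite /res; lra.
    rewrite ep eq; by move=> h; apply: le_trans h _; rewrite le_eqVlt; apply/orP; left; apply/eqP; ring.
  have hpos : 0 < p.1 j * - q.1 j by rewrite mulr_gt0 // oppr_gt0.
  by move: h2; rewrite pmulr_rge0 // subr_ge0.
have [s [Hl Hu]] := sandwich Hsw.
exists (y j + s) => r rL; rewrite /holds ev_upd.
have -> : y j + s - y j = s by ring.
case: (ltrgtP (r.1 j) 0) => hr.
- have : res r / r.1 j <= s by apply: Hl; apply/mapP; exists r => //; rewrite mem_filter hr.
  rewrite ler_ndivrMr // /res => h; lra.
- have : s <= res r / r.1 j by apply: Hu; apply/mapP; exists r => //; rewrite mem_filter hr.
  rewrite ler_pdivlMr // /res => h; lra.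
- have : holds r y by apply: H; rewrite mem_cat mem_filter hr eqxx rL.
  rewrite /holds hr mul0r addr0 //.
Qed.

Fixpoint elims (js : seq V) (L : seq row) : seq row :=
  if js is j :: js' then elim1 j (elims js' L) else L.

Lemma elims_cone js L r : r \in elims js L -> cone (fun r => r \in L) r.
Proof.
elim: js r => [|j js IH] r /=; first by apply: c_gen.
move/elim1_cone; apply: cone_trans; exact: IH.
Qed.

Lemma elims_zero js L r j : r \in elims js L -> j \in js -> r.1 j = 0.
Proof.
elim: js r => [|j0 js IH] r //= hr; rewrite inE => /orP[/eqP ->|hj].
- exact: elim1_zero hr.
- apply: (cone_zero _ (elim1_cone hr)) => r' hr'; exact: IH.
Qed.

Lemma elims_sound js L y : (forall r, r \in elims js L -> holds r y) ->
  exists y', (forall v, v \notin js -> y' v = y v) /\ forall r, r \in L -> holds r y'.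
Proof.
elim: js y => [|j js IH] y /= H; first by exists y.
have [t Ht] := elim1_sound H.
have [y' [H1 H2]] := IH _ Ht.
exists y'; split=> // v; rewrite inE negb_or => /andP[hv hv'].
by rewrite H1 // /upd (negPf hv).
Qed.

Lemma cone_coef (K : finType) (g : K -> row) r :
  cone (fun r => r \in map g (enum K)) r ->
  exists lam : K -> R, (forall k, 0 <= lam k) /\
    (forall v, r.1 v = \sum_k lam k * (g k).1 v) /\ r.2 = \sum_k lam k * (g k).2.
Proof.
elim=> {r} [r /mapP [k0 _ ->]|r1 r2 _ [l1 [p1 [e1 f1]]] _ [l2 [p2 [e2 f2]]]|c r c0 _ [l [p [e f]]]].
- exists (fun k => (k == k0)%:R); split; first by move=> k; apply: ler0n.
  split.
  + move=> v; rewrite (bigD1 k0) //= big1 ?eqxx ?mul1r ?addr0 // => k /negPf ->; by rewrite mul0r.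
  + rewrite (bigD1 k0) //= big1 ?eqxx ?mul1r ?addr0 // => k /negPf ->; by rewrite mul0r.
- exists (fun k => l1 k + l2 k); split; first by move=> k; rewrite addr_ge0.
  split; last by rewrite /= f1 f2 -big_split /=; apply: eq_bigr => k _; rewrite mulrDl.
  move=> v; rewrite /= ffunE e1 e2 -big_split /=; apply: eq_bigr => k _; by rewrite mulrDl.
- exists (fun k => c * l k); split; first by move=> k; rewrite mulr_ge0.
  split; last by rewrite /= f mulr_sumr; apply: eq_bigr => k _; rewrite mulrA.
  move=> v; rewrite /= ffunE e mulr_sumr; apply: eq_bigr => k _; by rewrite mulrA.
Qed.

End FM.
Section LP.
Variables (R : realFieldType) (X I : finType) (A : I -> X -> R) (b : I -> R) (c : X -> R).
Definition lpfeas (y : X -> R) := forall i, \sum_x A i x * y x <= b i.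
Definition cy (y : X -> R) := \sum_x c x * y x.

Lemma weak_dual (lam : I -> R) y : (forall i, 0 <= lam i) ->
  (forall x, c x + \sum_i lam i * A i x = 0) -> lpfeas y ->
  - \sum_i lam i * b i <= cy y.
Proof.
move=> hl hc hy.
have -> : cy y = - \sum_i lam i * \sum_x A i x * y x.
  rewrite /cy (eq_bigr (fun x => - \sum_i lam i * A i x * y x)); last first.
    move=> x _; have -> : c x = - \sum_i lam i * A i x by apply/eqP; rewrite -addr_eq0 hc.
    by rewrite mulNr mulr_suml.
  rewrite sumrN exchange_big /=; congr (- _); apply: eq_bigr => i _.
  by rewrite mulr_sumr; apply: eq_bigr => x _; rewrite mulrA.
rewrite lerN2; apply: ler_sum => i _; exact: ler_wpM2l.
Qed.

Definition gen (k : option I) : row R (option X) :=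
  match k with
  | None => ([ffun v => if v is Some x then c x else -1], 0)
  | Some i => ([ffun v => if v is Some x then A i x else 0], b i)
  end.

Definition mkw (y : X -> R) (z : R) : option X -> R :=
  fun v => if v is Some x then y x else z.

Lemma holds_gen w :
  (forall r, r \in map gen (enum {: option I}) -> holds r w) <->
  lpfeas (fun x => w (Some x)) /\ cy (fun x => w (Some x)) <= w None.
Proof.
split.
- move=> H; split.
  + move=> i; have := H (gen (Some i)) (map_f _ (mem_enum _ _)).
    by rewrite /holds /ev sum_option /= ffunE mul0r add0r; under eq_bigr do rewrite ffunE.
  + have := H (gen None) (map_f _ (mem_enum _ _)).
    rewrite /holds /ev sum_option /= ffunE; under eq_bigr do rewrite ffunE.
    rewrite /cy; lra.
- move=> [H1 H2] r /mapP [[i|] _ ->]; rewrite /holds /ev sum_option /= ffunE.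
  + rewrite mul0r add0r; under eq_bigr do rewrite ffunE; exact: H1.
  + under eq_bigr do rewrite ffunE; rewrite /cy in H2; lra.
Qed.

Lemma argmax (T : eqType) (f : T -> R) (s : seq T) x0 : x0 \in s ->
  exists x, x \in s /\ forall y, y \in s -> f y <= f x.
Proof.
elim: s x0 => [|a s IH] x0 //; rewrite inE => /orP[/eqP _|hx].
- case: s IH => [|a' s'] IH.
    by exists a; split; [rewrite inE eqxx | move=> y; rewrite inE => /eqP ->].
  have [x [hx1 hx2]] := IH a' (mem_head _ _).
  case: (leP (f a) (f x)) => h.
  + exists x; split; first by rewrite inE hx1 orbT.
    by move=> y; rewrite inE => /orP[/eqP ->|/hx2].
  + exists a; split; first by rewrite inE eqxx.
    move=> y; rewrite inE => /orP[/eqP ->//|/hx2 h']; exact: le_trans h' (ltW h).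
- have [x [hx1 hx2]] := IH _ hx.
  case: (leP (f a) (f x)) => h.
  + exists x; split; first by rewrite inE hx1 orbT.
    by move=> y; rewrite inE => /orP[/eqP ->|/hx2].
  + exists a; split; first by rewrite inE eqxx.
    move=> y; rewrite inE => /orP[/eqP ->//|/hx2 h']; exact: le_trans h' (ltW h).
Qed.

Lemma lp_dual : (exists y, lpfeas y) -> (exists d, forall y, lpfeas y -> d <= cy y) ->
  exists y, lpfeas y /\ exists lam : I -> R, [/\ forall i, 0 <= lam i,
    forall x, c x + \sum_i lam i * A i x = 0 & cy y = - \sum_i lam i * b i].
Proof.
move=> [y0 hy0] [d hd].
set L := map gen (enum {: option I}).
set js := map Some (enum X).
set L' := elims js L.
have evL' : forall r w, r \in L' -> ev r.1 w = r.1 None * w None.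
  move=> r w hr; rewrite /ev sum_option big1 ?addr0 // => x _.
  by rewrite (elims_zero hr) ?mul0r // map_f // mem_enum.
set z1 := cy y0.
have HL'1 : forall r, r \in L' -> r.1 None * z1 <= r.2.
  move=> r hr; rewrite -(evL' r (mkw y0 z1) hr).
  apply: (cone_holds _ (elims_cone hr)); apply/holds_gen; split => //.
have K : forall z, (forall r, r \in L' -> r.1 None * z <= r.2) ->
    exists y, lpfeas y /\ cy y <= z.
  move=> z hz.
  have [w [hw1 hw2]] : exists w, (forall v, v \notin js -> w v = mkw y0 z v) /\
      forall r, r \in L -> holds r w.
    apply: elims_sound => r hr; rewrite /holds evL' //; exact: hz.
  have [h1 h2] := (holds_gen w).1 hw2.
  exists (fun x => w (Some x)); split => //.
  rewrite hw1 // in h2; apply/mapP; by case.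
set lows := [seq r : row R (option X) <- L' | r.1 None < 0].
have [hlows|hlows] := eqVneq lows [::].
  have [y [hy hyz]] : exists y, lpfeas y /\ cy y <= Num.min z1 (d - 1).
    apply: K; move=> r hr; apply: le_trans (HL'1 r hr); apply: ler_wpM2l; last by rewrite ge_min lexx.
    rewrite leNgt; apply/negP => hneg.
    have : r \in lows by rewrite mem_filter hneg hr.
    by rewrite hlows.
  have := hd y hy; have : Num.min z1 (d - 1) <= d - 1 by rewrite ge_min lexx orbT.
  lra.
have [r0 hr0] : exists r0, r0 \in lows by case: lows hlows => [//|r0 s] _; exists r0; exact: mem_head.
have [rs [hrs hmax]] := argmax (fun r : row R (option X) => r.2 / r.1 None) hr0.
move: (hrs); rewrite mem_filter => /andP[hrsN hrsL].
set z0 := rs.2 / rs.1 None.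
have hz01 : z0 <= z1 by rewrite /z0 ler_ndivrMr // mulrC; exact: HL'1.
have [ys [hys hysz]] : exists y, lpfeas y /\ cy y <= z0.
  apply: K; move=> r hr; case: (ltP (r.1 None) 0) => hN.
  - have : r.2 / r.1 None <= z0 by apply: hmax; rewrite mem_filter hN hr.
    by rewrite ler_ndivrMr // mulrC.
  - apply: le_trans (HL'1 r hr); exact: ler_wpM2l.
have [lam [hlam [e1 e2]]] := cone_coef (elims_cone hrsL).
have hx : forall x, lam None * c x + \sum_i lam (Some i) * A i x = 0.
  move=> x; have := e1 (Some x); rewrite (elims_zero hrsL) ?map_f ?mem_enum //.
  rewrite sum_option /= ffunE => h; rewrite [RHS]h; congr (_ + _); apply: eq_bigr => i _; by rewrite ffunE.
have hN : rs.1 None = - lam None.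
  rewrite e1 sum_option /= ffunE big1 ?addr0 ?mulrN1 // => i _; by rewrite ffunE mulr0.
have h2 : rs.2 = \sum_i lam (Some i) * b i by rewrite e2 sum_option /= mulr0 add0r.
have lamN : 0 < lam None by rewrite -oppr_lt0 -hN.
exists ys; split => //.
exists (fun i => lam (Some i) / lam None); split.
- move=> i; by rewrite divr_ge0 // ltW.
- move=> x; have -> : \sum_i lam (Some i) / lam None * A i x =
     (\sum_i lam (Some i) * A i x) / lam None.
    by rewrite mulr_suml; apply: eq_bigr => i _; rewrite mulrAC.
  have -> : \sum_i lam (Some i) * A i x = - (lam None * c x) by apply/eqP; rewrite -addr_eq0 addrC hx.
  by rewrite mulNr mulrAC divff ?mul1r ?subrr // gt_eqF.
- have hw := weak_dual (lam := fun i => lam (Some i) / lam None) (y := ys).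
  have ez : z0 = - \sum_i lam (Some i) / lam None * b i.
    rewrite /z0 h2 hN invrN mulrN; congr (- _).
    by rewrite mulr_suml; apply: eq_bigr => i _; rewrite mulrAC.
  apply/eqP; rewrite eq_le -ez hysz /= ez; apply: hw => //.
  + move=> i; by rewrite divr_ge0 // ltW.
  + move=> x; have -> : \sum_i lam (Some i) / lam None * A i x =
       (\sum_i lam (Some i) * A i x) / lam None.
      by rewrite mulr_suml; apply: eq_bigr => i _; rewrite mulrAC.
    have -> : \sum_i lam (Some i) * A i x = - (lam None * c x) by apply/eqP; rewrite -addr_eq0 addrC hx.
    by rewrite mulNr mulrAC divff ?mul1r ?subrr // gt_eqF.
Qed.
End LP.
Section Main.
Variables (R : realFieldType) (n m : nat) (alpha : 'I_m -> R) (Js : 'I_m -> {set 'I_n}).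
Hypothesis hJs : forall i, Js i != set0.
Variable v : triple Js -> bool.

Local Notation T := (triple Js).
Local Notation X := {set 'I_n}.

Lemma tri_inN (t : T) : [/\ inN Js (Defs.head t), inN Js (tail1 t) & inN Js (tail2 t)].
Proof.
have := valP t; rewrite /is_triple => /and5P [hN _ h1 h2 _].
have hN' : inN Js (Defs.head t) by exact: hN.
split => //; case/existsP: hN' => i /andP [_ hs]; apply/existsP; exists i; apply/andP; split.
- exact: h1.
- exact: subset_trans (subsetUl _ _) hs.
- exact: h2.
- exact: subset_trans (subsetUr _ _) hs.
Qed.

Lemma tri_disj (t : T) : [/\ tail1 t != set0, tail2 t != set0 & [disjoint tail1 t & tail2 t]].
Proof. have := valP t; rewrite /is_triple => /and5P [_ _ h1 h2 /andP [h3 _]]; by split. Qed.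

Lemma tri_neq (t : T) : tail1 t != tail2 t.
Proof.
have [_ h2 hd] := tri_disj t.
apply/eqP => e; case/set0Pn: h2 => x hx.
have hx1 : x \in tail1 t by rewrite e.
by rewrite (disjointFr hd hx1) in hx.
Qed.

Lemma tri_card (t : T) : (#|tail1 t| < #|Defs.head t|)%N /\ (#|tail2 t| < #|Defs.head t|)%N.
Proof.
have [h1 h2 hd] := tri_disj t.
split; apply: proper_card; rewrite /Defs.head.
- apply: properUl; apply/negP => hs; case/set0Pn: h2 => x hx.
  by have := disjointFr hd (subsetP hs x hx); rewrite hx.
- apply: properUr; apply/negP => hs; case/set0Pn: h1 => x hx.
  by have := subsetP hs x hx; rewrite (disjointFr hd hx).
Qed.

Lemma sum1 (y : X -> R) J : \sum_x (x == J)%:R * y x = y J.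
Proof.
rewrite (bigD1 J) //= eqxx mul1r big1 ?addr0 // => x /negPf ->; by rewrite mul0r.
Qed.

Lemma sumT (f : T -> R) (g : T -> X) J :
  \sum_t f t * (J == g t)%:R = \sum_(t | g t == J) f t.
Proof.
rewrite [RHS]big_mkcond; apply: eq_bigr => t _; rewrite eq_sym; case: eqP => _;
  by rewrite ?mulr1 ?mulr0.
Qed.


Definition Iy := (({set 'I_n} + {set 'I_n}) + ((T + T) + T))%type.

Definition Am (i : Iy) (x : X) : R :=
  match i with
  | inl (inl J) => if inN Js J then (x == J)%:R else 0
  | inl (inr J) => if inN Js J then - (x == J)%:R else 0
  | inr (inl (inl t)) => if v t then (x == Defs.head t)%:R - (x == tail1 t)%:R else 0
  | inr (inl (inr t)) => if v t then (x == Defs.head t)%:R - (x == tail2 t)%:R else 0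
  | inr (inr t) => if v t then (x == tail1 t)%:R + (x == tail2 t)%:R - (x == Defs.head t)%:R else 0
  end.

Definition bm (i : Iy) : R :=
  match i with
  | inl (inl J) => if inN Js J then 1 else 0
  | inr (inr t) => if v t then 1 else 0
  | _ => 0
  end.

Definition cm (x : X) : R := if inN Js x then beta Js alpha x else 0.

Lemma evAm (y : X -> R) i : \sum_x Am i x * y x =
  match i with
  | inl (inl J) => if inN Js J then y J else 0
  | inl (inr J) => if inN Js J then - y J else 0
  | inr (inl (inl t)) => if v t then y (Defs.head t) - y (tail1 t) else 0
  | inr (inl (inr t)) => if v t then y (Defs.head t) - y (tail2 t) else 0
  | inr (inr t) => if v t then y (tail1 t) + y (tail2 t) - y (Defs.head t) else 0
  end.
Proof.
case: i => [[J|J]|[[t|t]|t]] /=; [case: (inN Js J)|case: (inN Js J)|case: (v t)..];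
  try (by rewrite big1 // => x _; rewrite mul0r).
- exact: sum1.
- by under eq_bigr do rewrite mulNr; rewrite sumrN sum1.
- by under eq_bigr do rewrite mulrBl; rewrite sumrB !sum1.
- by under eq_bigr do rewrite mulrBl; rewrite sumrB !sum1.
- by under eq_bigr do rewrite mulrBl mulrDl; rewrite sumrB big_split /= !sum1.
Qed.

Lemma feas_equiv y : lpfeas Am bm y <-> inner_feas v y.
Proof.
split.
- move=> H.
  have hb : forall J, inN Js J -> 0 <= y J <= 1.
    move=> J hJ; have := H (inl (inl J)); have := H (inl (inr J)).
    rewrite !evAm /= hJ => h1 h2; apply/andP; split; lra.
  split => // t; have [hh h1 h2] := tri_inN t.
  have := hb _ hh; have := hb _ h1; have := hb _ h2.
  move=> /andP [a1 a2] /andP [b1 b2] /andP [c1 c2].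
  have := H (inr (inl (inl t))); have := H (inr (inl (inr t))); have := H (inr (inr t)).
  rewrite !evAm /=; case: (v t) => /= e1 e2 e3; split; lra.
- move=> [hb ht] i; rewrite evAm; case: i => [[J|J]|[[t|t]|t]] /=.
  + case hJ: (inN Js J) => //; by case/andP: (hb J hJ).
  + case hJ: (inN Js J) => //; case/andP: (hb J hJ) => h _; lra.
  + have [h1 h2 h3] := ht t; move: h1 h2 h3; case: (v t) => /= h1 h2 h3; lra.
  + have [h1 h2 h3] := ht t; move: h1 h2 h3; case: (v t) => /= h1 h2 h3; lra.
  + have [h1 h2 h3] := ht t; move: h1 h2 h3; case: (v t) => /= h1 h2 h3; lra.
Qed.

Lemma inN_Js i : inN Js (Js i).
Proof. apply/existsP; exists i; by rewrite /inNi hJs subxx. Qed.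

Lemma obj_eq y : inner_obj Js alpha y = cy cm y.
Proof.
rewrite /inner_obj /cy (partition_big Js (inN Js)) => [|i _]; last exact: inN_Js.
rewrite [RHS](bigID (inN Js)) /= [X in _ = _ + X]big1 ?addr0 => [|x /negPf hx]; last first.
  by rewrite /cm hx mul0r.
apply: eq_bigr => J hJ; rewrite /cm hJ /beta mulr_suml; apply: eq_bigr => i /eqP <- //.
Qed.

Lemma obj_lb y : inner_feas v y -> - Defs.eta alpha <= inner_obj Js alpha y.
Proof.
move=> [hb _]; rewrite /Defs.eta opprK /inner_obj; apply: ler_sum => i _.
have /andP [h0 h1] := hb _ (inN_Js i).
case: (leP 0 (alpha i)) => ha.
- by rewrite mulr_ge0.
- nra.
Qed.


Definition L1 (lam : Iy -> R) (t : T) : R := if v t then lam (inr (inl (inl t))) else 0.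
Definition L2 (lam : Iy -> R) (t : T) : R := if v t then lam (inr (inl (inr t))) else 0.
Definition L3 (lam : Iy -> R) (t : T) : R := if v t then lam (inr (inr t)) else 0.

Lemma sumI1 (f : X -> R) x :
  \sum_J f J * (if inN Js J then (x == J)%:R else 0) = if inN Js x then f x else 0.
Proof.
rewrite (bigD1 x) //= eqxx big1 => [|J hJ]; first by case: (inN Js x); rewrite ?mulr1 ?mulr0 addr0.
by rewrite eq_sym (negPf hJ); case: (inN Js J); rewrite mulr0.
Qed.

Lemma sumI2 (f : X -> R) x :
  \sum_J f J * (if inN Js J then - (x == J)%:R else 0) = if inN Js x then - f x else 0.
Proof.
rewrite (bigD1 x) //= eqxx big1 => [|J hJ]; first by case: (inN Js x); rewrite ?mulrN1 ?mulr0 addr0.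
by rewrite eq_sym (negPf hJ); case: (inN Js J); rewrite ?oppr0 mulr0.
Qed.

Lemma expandA (lam : Iy -> R) x : \sum_i lam i * Am i x =
  (if inN Js x then lam (inl (inl x)) - lam (inl (inr x)) else 0)
  + (\sum_(t | tail1 t == x) (- L1 lam t + L3 lam t)
     + \sum_(t | tail2 t == x) (- L2 lam t + L3 lam t)
     + \sum_(t | Defs.head t == x) (L1 lam t + L2 lam t - L3 lam t)).
Proof.
have e1 : \sum_t lam (inr (inl (inl t))) * Am (inr (inl (inl t))) x =
    \sum_(t | Defs.head t == x) L1 lam t - \sum_(t | tail1 t == x) L1 lam t.
  rewrite -!sumT -sumrB; apply: eq_bigr => t _; rewrite /L1 /=.
  by case: (v t); rewrite ?mulrBr ?mulr0 ?mul0r ?subrr.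
have e2 : \sum_t lam (inr (inl (inr t))) * Am (inr (inl (inr t))) x =
    \sum_(t | Defs.head t == x) L2 lam t - \sum_(t | tail2 t == x) L2 lam t.
  rewrite -!sumT -sumrB; apply: eq_bigr => t _; rewrite /L2 /=.
  by case: (v t); rewrite ?mulrBr ?mulr0 ?mul0r ?subrr.
have e3 : \sum_t lam (inr (inr t)) * Am (inr (inr t)) x =
    \sum_(t | tail1 t == x) L3 lam t + \sum_(t | tail2 t == x) L3 lam t
    - \sum_(t | Defs.head t == x) L3 lam t.
  rewrite -!sumT -big_split -sumrB; apply: eq_bigr => t _; rewrite /L3 /=.
  by case: (v t); ring.
rewrite !big_sumType e1 e2 e3 /= sumI1 sumI2 !big_split /= !sumrN.
have -> : (if inN Js x then lam (inl (inl x)) - lam (inl (inr x)) else 0) =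
   (if inN Js x then lam (inl (inl x)) else 0) + (if inN Js x then - lam (inl (inr x)) else 0).
  by case: (inN Js x); rewrite ?addr0.
set a1 := \sum_(t | tail1 t == x) L1 lam t.
set a2 := \sum_(t | tail2 t == x) L2 lam t.
set a3 := \sum_(t | tail1 t == x) L3 lam t.
set a4 := \sum_(t | tail2 t == x) L3 lam t.
set a5 := \sum_(t | Defs.head t == x) L1 lam t.
set a6 := \sum_(t | Defs.head t == x) L2 lam t.
set a7 := \sum_(t | Defs.head t == x) L3 lam t.
congr (_ + _); lra.
Qed.

Lemma bm_sum (lam : Iy -> R) :
  \sum_i lam i * bm i = \sum_(J | inN Js J) lam (inl (inl J)) + \sum_t L3 lam t.
Proof.
rewrite !big_sumType /=.
have z : forall (K : finType) (F : K -> R), \sum_k F k * 0 = 0.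
  by move=> K F; rewrite big1 // => k _; rewrite mulr0.
rewrite !z !addr0 add0r [X in _ = X + _]big_mkcond; congr (_ + _); apply: eq_bigr.
- move=> J _.
  by case: (inN Js J); rewrite ?mulr1 ?mulr0.
- move=> t _. by rewrite /L3; case: (v t); rewrite ?mulr1 ?mulr0.
Qed.


Definition Gx (l1 l2 l3 : T -> R) (mu : X -> R) (J : X) : R :=
  beta Js alpha J
  + \sum_(t | tail1 t == J) (- l1 t + l3 t)
  + \sum_(t | tail2 t == J) (- l2 t + l3 t)
  + \sum_(t | Defs.head t == J) (l1 t + l2 t - l3 t)
  + mu J.

Lemma bigM_bound (l1 l2 l3 : T -> R) (mu : X -> R) :
  (forall t, [/\ 0 <= l1 t, 0 <= l2 t & 0 <= l3 t]) ->
  (forall J, inN Js J -> 0 <= mu J) ->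
  (forall J, inN Js J -> 0 <= Gx l1 l2 l3 mu J) ->
  \sum_t l3 t + \sum_(J | inN Js J) mu J <= Defs.eta alpha ->
  forall t, [/\ l1 t <= M1 alpha t, l2 t <= M2 alpha t & l3 t <= M3 alpha t].
Proof.
move=> hnn hmu hG hsum.
have s3 : 0 <= \sum_t l3 t by apply: sumr_ge0 => t _; case: (hnn t).
have smu : 0 <= \sum_(J | inN Js J) mu J by apply: sumr_ge0 => J hJ; exact: hmu.
set S := fun J => \sum_(t | tail1 t == J) l1 t + \sum_(t | tail2 t == J) l2 t.
have hS1 : forall t, l1 t <= S (tail1 t).
  move=> t; rewrite /S (bigD1 t) //=.
  have h1 : 0 <= \sum_(i | (tail1 i == tail1 t) && (i != t)) l1 i by apply: sumr_ge0 => i _; case: (hnn i).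
  have h2 : 0 <= \sum_(i | tail2 i == tail1 t) l2 i by apply: sumr_ge0 => i _; case: (hnn i).
  lra.
have hS2 : forall t, l2 t <= S (tail2 t).
  move=> t; rewrite /S [X in _ <= _ + X](bigD1 t) //=.
  have h1 : 0 <= \sum_(i | (tail2 i == tail2 t) && (i != t)) l2 i by apply: sumr_ge0 => i _; case: (hnn i).
  have h2 : 0 <= \sum_(i | tail1 i == tail2 t) l1 i by apply: sumr_ge0 => i _; case: (hnn i).
  lra.
have key : forall d J, inN Js J -> (#|J| <= d)%N -> S J <= Rfuel Js alpha d J.
  elim=> [|d IH] J hJ hc.
  - exfalso; move: hc; rewrite leqn0 cards_eq0 => /eqP e.
    by case/existsP: hJ => i /andP []; rewrite e eqxx.
  - rewrite /= le_max; apply/orP; right.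
    have h13 : \sum_(t | tail1 t == J) l3 t + \sum_(t | tail2 t == J) l3 t <= \sum_t l3 t.
      rewrite [\sum_(t | tail1 t == J) _]big_mkcond [\sum_(t | tail2 t == J) _]big_mkcond -big_split /=; apply: ler_sum => t _.
      have hn := tri_neq t; have [_ _ h3] := hnn t.
      case: eqP => e1; case: eqP => e2 /=.
      + by rewrite e1 e2 eqxx in hn.
      + by rewrite addr0.
      + by rewrite add0r.
      + by rewrite addr0.
    have hmuJ : mu J <= \sum_(J | inN Js J) mu J.
      rewrite (bigD1 J) //= lerDl; apply: sumr_ge0 => J' /andP [h _]; exact: hmu.
    have hh3 : 0 <= \sum_(t | Defs.head t == J) l3 t by apply: sumr_ge0 => t _; case: (hnn t).
    have hhl : \sum_(t | Defs.head t == J) (l1 t + l2 t) <=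
               \sum_(t : T | Defs.head t == J) (Rfuel Js alpha d (tail1 t) + Rfuel Js alpha d (tail2 t)).
      apply: ler_sum => t /eqP ht; have [_ h1 h2] := tri_inN t; have [c1 c2] := tri_card t.
      rewrite ht in c1 c2.
      apply: lerD.
      + apply: le_trans (hS1 t) (IH _ h1 _); rewrite -ltnS; exact: leq_trans c1 hc.
      + apply: le_trans (hS2 t) (IH _ h2 _); rewrite -ltnS; exact: leq_trans c2 hc.
    have := hG J hJ; rewrite /Gx !big_split /= !sumrN.
    rewrite !big_split /= in hhl.
    move: hhl h13 hmuJ hh3 hsum; rewrite /S.
    set a1 := \sum_(t | tail1 t == J) l1 t.
    set a2 := \sum_(t | tail2 t == J) l2 t.
    set a3 := \sum_(t | tail1 t == J) l3 t.
    set a4 := \sum_(t | tail2 t == J) l3 t.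
    set a5 := \sum_(t | Defs.head t == J) l1 t.
    set a6 := \sum_(t | Defs.head t == J) l2 t.
    set a7 := \sum_(t | Defs.head t == J) l3 t.
    set b1 := \sum_(t : T | Defs.head t == J) Rfuel Js alpha d (tail1 t).
    set b2 := \sum_(t : T | Defs.head t == J) Rfuel Js alpha d (tail2 t).
    set e := Defs.eta alpha. set bt := beta Js alpha J.
    set s3' := \sum_t l3 t. set sm := \sum_(J0 | inN Js J0) mu J0.
    lra.
move=> t; split.
- apply: le_trans (hS1 t) _; rewrite /M1 /Rconst; apply: key => //; by case: (tri_inN t).
- apply: le_trans (hS2 t) _; rewrite /M2 /Rconst; apply: key => //; by case: (tri_inN t).
- rewrite /M3; have [_ _ h3] := hnn t.
  have : l3 t <= \sum_t l3 t.
    rewrite (bigD1 t) //= lerDl; apply: sumr_ge0 => i _; by case: (hnn i).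
  lra.
Qed.


Lemma expandA' (lam : Iy -> R) (f1 f2 f3 : T -> R) x :
  (forall t, L1 lam t = f1 t) -> (forall t, L2 lam t = f2 t) -> (forall t, L3 lam t = f3 t) ->
  \sum_i lam i * Am i x =
  (if inN Js x then lam (inl (inl x)) - lam (inl (inr x)) else 0)
  + (\sum_(t | tail1 t == x) (- f1 t + f3 t)
     + \sum_(t | tail2 t == x) (- f2 t + f3 t)
     + \sum_(t | Defs.head t == x) (f1 t + f2 t - f3 t)).
Proof.
move=> e1 e2 e3; rewrite expandA; congr (_ + (_ + _ + _)); apply: eq_bigr => t _;
  by rewrite ?e1 ?e2 ?e3.
Qed.

Lemma main_v : exists c, inner_min alpha v c /\ mip_max alpha v c.
Proof.
have hex : exists y, lpfeas Am bm y.
  exists (fun _ => 0); apply/feas_equiv; split => [J _|t]; first by rewrite lexx ler01.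
  by case: (v t) => /=; split; lra.
have hbd : exists d, forall y, lpfeas Am bm y -> d <= cy cm y.
  exists (- Defs.eta alpha) => y /feas_equiv hy; rewrite -obj_eq; exact: obj_lb.
have [ys [hys [lam [hl hc hval]]]] := lp_dual hex hbd.
have hysf : inner_feas v ys by apply/feas_equiv.
pose mu := fun J => lam (inl (inl J)).
have Hval : cy cm ys = mip_obj (L3 lam) mu.
  by rewrite hval bm_sum /mip_obj opprD addrC.
have hnn : forall t, [/\ 0 <= L1 lam t, 0 <= L2 lam t & 0 <= L3 lam t].
  by move=> t; rewrite /L1 /L2 /L3; case: (v t); split; rewrite ?lexx ?hl.
have hmu : forall J, inN Js J -> 0 <= mu J by move=> J _; exact: hl.
have hG : forall J, inN Js J -> 0 <= Gx (L1 lam) (L2 lam) (L3 lam) mu J.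
  move=> J hJ; have h0 := hc J; have h1 := hl (inl (inr J)).
  rewrite expandA /cm hJ in h0; rewrite /Gx /mu /=.
  move: h0 h1.
  set a := \sum_(t | tail1 t == J) (- L1 lam t + L3 lam t).
  set b := \sum_(t | tail2 t == J) (- L2 lam t + L3 lam t).
  set c := \sum_(t | Defs.head t == J) (L1 lam t + L2 lam t - L3 lam t).
  set bt := beta Js alpha J.
  lra.
have hsum : \sum_t L3 lam t + \sum_(J | inN Js J) mu J <= Defs.eta alpha.
  have := obj_lb hysf; rewrite obj_eq Hval /mip_obj; lra.
have hM := bigM_bound hnn hmu hG hsum.
have Hfeas : mip_feas alpha v (L1 lam) (L2 lam) (L3 lam) mu.
  split => //.
  move=> t; have [h1 h2 h3] := hM t; move: h1 h2 h3 (hnn t).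
  rewrite /L1 /L2 /L3; case: (v t) => /= h1 h2 h3 [g1 g2 g3]; rewrite ?mulr1 ?mulr0; by split.
exists (cy cm ys); split.
- split; first by exists ys; split => //; rewrite obj_eq.
  move=> y hy; rewrite obj_eq hval; apply: weak_dual => //; exact/feas_equiv.
- split; first by exists (L1 lam), (L2 lam), (L3 lam), mu; split => //; rewrite Hval.
  move=> l1' l2' l3' mu' [hnn' hmu' hG' hM'].
  have z : forall t, v t = false -> [/\ l1' t = 0, l2' t = 0 & l3' t = 0].
    move=> t hvt; have [a1 a2 a3] := hnn' t; have [b1 b2 b3] := hM' t.
    rewrite hvt /= !mulr0 in b1 b2 b3.
    by split; apply/le_anti/andP; split.
  pose lam' : Iy -> R := fun i => match i with
    | inl (inl J) => if inN Js J then mu' J else 0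
    | inl (inr J) => if inN Js J then Gx l1' l2' l3' mu' J else 0
    | inr (inl (inl t)) => l1' t
    | inr (inl (inr t)) => l2' t
    | inr (inr t) => l3' t end.
  have eL1 : forall t, L1 lam' t = l1' t.
    by move=> t; rewrite /L1 /=; case hvt: (v t) => //; case: (z t hvt).
  have eL2 : forall t, L2 lam' t = l2' t.
    by move=> t; rewrite /L2 /=; case hvt: (v t) => //; case: (z t hvt).
  have eL3 : forall t, L3 lam' t = l3' t.
    by move=> t; rewrite /L3 /=; case hvt: (v t) => //; case: (z t hvt).
  have hw := @weak_dual _ _ _ Am bm cm lam' ys.
  have hb : \sum_i lam' i * bm i = \sum_(J | inN Js J) mu' J + \sum_t l3' t.
    rewrite bm_sum; congr (_ + _); apply: eq_bigr; [by move=> J hJ /=; rewrite hJ | move=> t _; exact: eL3].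
  rewrite hb in hw; rewrite /mip_obj.
  suff : - (\sum_(J | inN Js J) mu' J + \sum_t l3' t) <= cy cm ys by lra.
  apply: hw => //.
  + case=> [[J|J]|[[t|t]|t]] /=; try by case: (hnn' t).
    * by case hJ: (inN Js J); rewrite ?lexx ?hmu'.
    * by case hJ: (inN Js J); rewrite ?lexx ?hG'.
  + move=> x; rewrite (expandA' x eL1 eL2 eL3) /cm.
    case hx: (inN Js x).
    * rewrite /= hx /Gx.
      set a := \sum_(t | tail1 t == x) (- l1' t + l3' t).
      set b := \sum_(t | tail2 t == x) (- l2' t + l3' t).
      set c := \sum_(t | Defs.head t == x) (l1' t + l2' t - l3' t).
      set bt := beta Js alpha x.
      lra.
    * rewrite add0r !big1 ?addr0 // => t /eqP e; exfalso; have [q1 q2 q3] := tri_inN t;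
        by rewrite e hx in q1 q2 q3.
Qed.

End Main.

Theorem theorem4 (R : realFieldType) (n m : nat) (alpha : 'I_m -> R)
    (Js : 'I_m -> {set 'I_n}) (hJs : forall i, Js i != set0) (k : nat)
    (v : triple Js -> bool) (hv : inVk k v) :
  exists c : R, inner_min alpha v c /\ mip_max alpha v c.
Proof. exact: (@main_v R n m alpha Js hJs v). Qed.
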